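(* Let $k$ be a field, $R$ a commutative $k$-algebra, $M$ an $R$-module, $x$ an $n$-tuple in $R$, $R'=k[x]\subseteq R$, and let $y$ be an $m$-tuple in $R'$ with $\langle y\rangle=\langle x\rangle$ as ideals of $R'$. Let $q\in k[X_1,\ldots,X_n]$ be a polynomial with constant term $q(0)$, and let $z=(y,q(x))$, an $(m+1)$-tuple in $R$. If $b=(0,\lambda)\in\sigma(z,M)$ for some $\lambda\in k$ (with $0\in k^m$), then $0\in\sigma(y,M)$ and $\lambda=q(0)$. Moreover, for this $b$, $\dim_k H_p(z-b,M)=\dim_k H_{p-1}(y,M)+\dim_k H_p(y,M)$ for all $p$, and $i(z-b)=0$ whenever $i(y)<\infty$.
   Context: For a commutative $k$-algebra $R$, an $R$-module $M$ and an $n$-tuple $y=(y_1,\ldots,y_n)$ in $R$, the Koszul complex $\operatorname{Kos}(y,M)$ is $0\leftarrow M\leftarrow M\otimes_k\wedge^1k^n\leftarrow\cdots\leftarrow M\otimes_k\wedge^nk^n\leftarrow 0$ with differential $\partial(m\otimes e_{i_1}\wedge\cdots\wedge e_{i_p})=\sum_{s=1}^p(-1)^{s+1}y_{i_s}m\otimes e_{i_1}\wedge\cdots\wedge\widehat{e_{i_s}}\wedge\cdots\wedge e_{i_p}$; its homology groups are denoted $H_p(y,M)$; $H_{-1}:=0$. For $a\in k^n$, $y-a=(y_1-a_1,\ldots,y_n-a_n)$. The Taylor spectrum $\sigma(y,M)$ is the set of $a\in k^n$ such that $\operatorname{Kos}(y-a,M)$ is not exact. The index is $i(y)=\sum_{p=0}^n(-1)^{p+1}\dim_k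 H_p(y,M)$, defined (written $i(y)<\infty$) when all these dimensions are finite. *)

(* Defs.v *)
From HB Require Import structures.
From mathcomp Require Import all_boot all_order all_algebra.
From mathcomp Require Import mpoly.
Set Implicit Arguments. Unset Strict Implicit. Unset Printing Implicit Defensive.
Import Order.TTheory GRing.Theory Num.Theory.
Local Open Scope ring_scope.

(* A chain of Kos(y,M) in degree p (y an n-tuple) is
   represented as a function  c : {set 'I_n} -> M  vanishing outside the
   p-element subsets: c S is the coefficient of e_S = e_{i_1}/\.../\e_{i_p}
   (i_1 < ... < i_p the elements of S).  Degrees are integers; in negative
   degree the only chain is 0, so H_{-1} = 0 automatically. *)

Section Koszul.
Variables (k : fieldType) (R : comAlgType k) (M : lmodType R).

Definition kos_deg (n : nat) (p : int) (c : {set 'I_n} -> M) : Prop :=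
  forall S : {set 'I_n}, (#|S|%:Z != p) -> c S = 0.

(* The Koszul differential:
   d(m e_S) = sum_{s in S} (-1)^{#{t in S | t < s}} y_s m e_{S \ s},
   hence (d c)(T) = sum_{s notin T} (-1)^{#{t in T | t < s}} y_s c(T u {s}). *)
Definition kos_d (n : nat) (y : 'I_n -> R) (c : {set 'I_n} -> M)
    : {set 'I_n} -> M :=
  fun T => \sum_(s : 'I_n | s \notin T)
             ((-1) ^+ #|[set t in T | (t < s)%N]| * y s) *: c (s |: T).

Definition kos_cycle n (y : 'I_n -> R) (p : int) (c : {set 'I_n} -> M) :=
  kos_deg p c /\ kos_d y c = (fun _ => 0).

Definition kos_bdry n (y : 'I_n -> R) (p : int) (c : {set 'I_n} -> M) :=
  exists e : {set 'I_n} -> M, kos_deg (p + 1) e /\ c = kos_d y e.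

Definition kos_lincomb n d (a : 'I_d -> k) (v : 'I_d -> ({set 'I_n} -> M))
    : {set 'I_n} -> M :=
  fun S => \sum_(i < d) (a i)%:A *: v i S.

(* dim_k H_p(y,M) = d  (H_p = cycles / boundaries): there are d cycles whose
   classes form a k-basis of H_p. *)
Definition kos_hdim n (y : 'I_n -> R) (p : int) (d : nat) : Prop :=
  exists v : 'I_d -> ({set 'I_n} -> M),
    [/\ forall i, kos_cycle y p (v i),
        forall a : 'I_d -> k, kos_bdry y p (kos_lincomb a v) -> forall i, a i = 0
      & forall c, kos_cycle y p c ->
          exists a : 'I_d -> k,
            kos_bdry y p (fun S => c S - kos_lincomb a v S)].

Definition kos_exact n (y : 'I_n -> R) : Prop :=
  forall p c, kos_cycle y p c -> kos_bdry y p c.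

Definition kos_shift n (y : 'I_n -> R) (a : 'I_n -> k) : 'I_n -> R :=
  fun i => y i - (a i)%:A.

Definition in_taylor_spectrum n (y : 'I_n -> R) (a : 'I_n -> k) : Prop :=
  ~ kos_exact (kos_shift y a).

(* i(y) < oo and i(y) = i:  all H_p(y,M), 0 <= p <= n, are finite dimensional,
   and sum_{p=0}^n (-1)^{p+1} dim_k H_p(y,M) = i. *)
Definition kos_index_is n (y : 'I_n -> R) (i : int) : Prop :=
  exists e : nat -> nat,
    (forall p : nat, (p <= n)%N -> kos_hdim y p%:Z (e p)) /\
    i = \sum_(p < n.+1) (-1) ^+ p.+1 * (e p)%:Z.

End Koszul.

Definition snoc_tuple (T : Type) (m : nat) (y : 'I_m -> T) (t : T)
    : 'I_m.+1 -> T :=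
  fun i => if @insub nat (fun j => (j < m)%N) 'I_m (val i) is Some j then y j
           else t.

(* Main.v *)
Require Import Defs.
From HB Require Import structures.
From mathcomp Require Import all_boot all_order all_algebra.
From mathcomp Require Import mpoly ring.
From Stdlib Require Import Classical IndefiniteDescription FunctionalExtensionality.
Set Implicit Arguments. Unset Strict Implicit. Unset Printing Implicit Defensive.
Import Order.TTheory GRing.Theory Num.Theory.
Local Open Scope ring_scope.

Section Kbasic.
Variables (k : fieldType) (R : comAlgType k) (M : lmodType R) (n : nat).
Implicit Types (T S : {set 'I_n}) (c : {set 'I_n} -> M).

Definition sg T (s : 'I_n) : R := (-1) ^+ #|[set t in T | (t < s)%N]|.

Lemma sgU T s j : s != j -> s \notin T ->
  sg (s |: T) j = (if (s < j)%N then -1 else 1) * sg T j.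
Proof.
move=> sj sT; rewrite /sg.
case: ifP => lt.
  have -> : [set t in s |: T | (t < j)%N] = s |: [set t in T | (t < j)%N].
    by apply/setP => t; rewrite !inE; case: eqP => [->|]; rewrite ?lt ?orbF.
  by rewrite cardsU1 inE (negbTE sT) /= exprS.
have -> : [set t in s |: T | (t < j)%N] = [set t in T | (t < j)%N].
  by apply/setP => t; rewrite !inE; case: eqP => [->|]; rewrite ?lt ?andbF.
by rewrite mul1r.
Qed.

Lemma sg_self T j : sg (T :\ j) j = sg T j.
Proof.
rewrite /sg; congr (_ ^+ _); apply: eq_card => t; rewrite !inE.
by case: eqP => [->|]; rewrite ?ltnn ?andbF.
Qed.

Lemma sg_selfU T j : sg (j |: T) j = sg T j.
Proof.
rewrite /sg; congr (_ ^+ _); apply: eq_card => t; rewrite !inE.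
by case: eqP => [->|]; rewrite ?ltnn ?andbF.
Qed.

Lemma sg_sq T j : sg T j * sg T j = 1.
Proof. by rewrite /sg -exprD addnn -signr_odd odd_double expr0. Qed.

Lemma sign_anti (s u : 'I_n) : s != u ->
  (if (s < u)%N then -1 else 1) = - (if (u < s)%N then -1 else 1) :> R.
Proof.
move=> su; case: ltngtP => h; rewrite ?opprK //.
by move: su; rewrite -(inj_eq val_inj) /= h eqxx.
Qed.

Definition kos_w (j : 'I_n) c : {set 'I_n} -> M :=
  fun T => if j \in T then sg T j *: c (T :\ j) else 0.

End Kbasic.
Arguments sg {k R n}.
Arguments kos_w {k R M n}.
Arguments sgU {k R n T s j}.
Arguments sg_self {k R n T j}.
Arguments sg_selfU {k R n T j}.
Arguments sg_sq {k R n T j}.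
Arguments sign_anti {k R n s u}.
Section Kb2.
Variables (k : fieldType) (R : comAlgType k) (M : lmodType R) (n : nat).
Implicit Types (T S : {set 'I_n}) (c : {set 'I_n} -> M) (y : 'I_n -> R).

Lemma eps_sq (s j : 'I_n) : (if (s < j)%N then -1 else 1) * (if (s < j)%N then -1 else 1) = 1 :> R.
Proof. by case: ifP; rewrite ?mulN1r ?opprK ?mulr1. Qed.

Lemma kos_dE y c T :
  kos_d y c T = \sum_(s | s \notin T) (sg T s * y s) *: c (s |: T).
Proof. by []. Qed.

Lemma kos_homot1 y (j : 'I_n) c T :
  kos_d y (kos_w j c) T + kos_w j (kos_d y c) T = y j *: c T.
Proof.
rewrite !kos_dE /kos_w; case: (boolP (j \in T)) => jT.
  rewrite kos_dE.
  have -> : \sum_(s | s \notin T :\ j) (sg (T :\ j) s * y s) *: c (s |: T :\ j)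
     = (sg (T :\ j) j * y j) *: c (j |: T :\ j) +
       \sum_(s | s \notin T) (sg (T :\ j) s * y s) *: c (s |: T :\ j).
    rewrite (bigD1 j) ?setD11 //=; congr (_ + _); apply: eq_bigl => s /=.
    by rewrite !inE negb_and negbK; case: (eqVneq s j) => [->|sj]; rewrite ?jT /= ?andbT.
  rewrite sg_self setD1K // scalerDr scalerA mulrA sg_sq mul1r addrCA.
  rewrite scaler_sumr -big_split /= big1 ?addr0 // => s sT.
  have sj : s != j by apply: contraNneq sT => ->.
  rewrite !inE jT orbT /=.
  have E1 := @sgU _ R _ T s j sj sT.
  have E2 : sg (T :\ j) s = (if (j < s)%N then -1 else 1) * sg T s :> R.
    have := @sgU _ R _ (T :\ j) j s; rewrite setD1K // setD11 eq_sym => /(_ sj isT) ->.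
    by rewrite mulrA eps_sq mul1r.
  have E3 : (s |: T) :\ j = s |: (T :\ j).
    by apply/setP => t; rewrite !inE; case: (eqVneq t s) => [->|ts]; rewrite ?eqxx ?sj /=.
  rewrite E1 E2 E3 (sign_anti (R:=R) sj) !scalerA -scalerDl.
  set e := (if _ then _ else _).
  have -> : sg T s * y s * (- e * sg T j) + sg T j * (e * sg T s * y s) = 0 by ring.
  by rewrite scale0r.
rewrite addr0 (bigD1 j) //= setU11 sg_selfU setU1K // scalerA mulrAC sg_sq mul1r.
rewrite big1 ?addr0 // => s /andP [sT sj].
by rewrite !inE eq_sym (negbTE sj) (negbTE jT) scaler0.
Qed.


Lemma kos_d_ext y c1 c2 T : c1 =1 c2 -> kos_d y c1 T = kos_d y c2 T.
Proof. by move=> e; rewrite !kos_dE; apply: eq_bigr => s _; rewrite e. Qed.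

Lemma kos_w_ext j c1 c2 T : c1 =1 c2 -> kos_w j c1 T = kos_w j c2 T.
Proof. by move=> e; rewrite /kos_w e. Qed.

Definition Gdd (a b : 'I_n -> R) c T (s u : 'I_n) : M :=
  if [|| u == s, s \in T | u \in T] then 0 else
  (sg T s * a s) *: ((sg (s |: T) u * b u) *: c (u |: (s |: T))).

Lemma dd_expand a b c T : kos_d a (kos_d b c) T =
  \sum_(s < n) \sum_(u < n) Gdd a b c T s u.
Proof.
rewrite kos_dE big_mkcond; apply: eq_bigr => s _ /=.
case: (boolP (s \in T)) => sT /=.
  by rewrite big1 // => u _; rewrite /Gdd sT orbT.
rewrite kos_dE scaler_sumr big_mkcond; apply: eq_bigr => u _ /=.
rewrite /Gdd (negbTE sT) !inE negb_or; case: (eqVneq u s) => [->|us] /=.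
  by [].
by case: (u \in T).
Qed.

Lemma Gdd_anti a b c T s u : Gdd a b c T s u = - Gdd b a c T u s.
Proof.
rewrite /Gdd; case: (eqVneq s u) => [->|su] /=; first by rewrite oppr0.
case: (boolP (s \in T)) => sT /=; first by rewrite orbT oppr0.
case: (boolP (u \in T)) => uT /=; first by rewrite oppr0.
have us : u != s by rewrite eq_sym.
rewrite (sgU su sT) (@sgU _ R _ T u s us uT) setUCA !scalerA -scaleNr.
congr (_ *: _); rewrite (sign_anti (R:=R) su).
ring.
Qed.

Lemma anti_sum0 (F : 'I_n -> 'I_n -> M) :
  (forall s, F s s = 0) -> (forall s u, F s u = - F u s) ->
  \sum_(s < n) \sum_(u < n) F s u = 0.
Proof.
move=> F0 Fa.
have E : forall s u, F s u =
    (if (s < u)%N then F s u else 0) + (if (u < s)%N then F s u else 0).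
  move=> s u; case: ltngtP => h; rewrite ?addr0 ?add0r //.
  by have -> : s = u by apply: val_inj.
transitivity (\sum_(s < n) \sum_(u < n) (if (s < u)%N then F s u else 0) +
              \sum_(s < n) \sum_(u < n) (if (u < s)%N then F s u else 0)).
  rewrite -big_split; apply: eq_bigr => s _; rewrite -big_split.
  by apply: eq_bigr => u _; exact: E.
rewrite [X in _ + X]exchange_big /=.
have -> : \sum_(u < n) \sum_(s < n) (if (u < s)%N then F s u else 0) =
          - \sum_(u < n) \sum_(s < n) (if (u < s)%N then F u s else 0).
  rewrite -sumrN; apply: eq_bigr => u _; rewrite -sumrN; apply: eq_bigr => s _.
  by case: ifP; rewrite ?oppr0 // => _; exact: Fa.
by rewrite subrr.
Qed.

Lemma Gdd_diag a b c T s : Gdd a b c T s s = 0.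
Proof. by rewrite /Gdd eqxx. Qed.

Lemma kos_dd y c T : kos_d y (kos_d y c) T = 0.
Proof. by rewrite dd_expand anti_sum0 // => s; [exact: Gdd_diag | exact: Gdd_anti]. Qed.

Lemma kos_dd_anti a b c T :
  kos_d a (kos_d b c) T + kos_d b (kos_d a c) T = 0.
Proof.
rewrite !dd_expand -big_split /=.
rewrite (eq_bigr (fun s => \sum_(u < n) (Gdd a b c T s u + Gdd b a c T s u)));
  last by move=> s _; rewrite big_split.
apply: anti_sum0 => [s|s u]; first by rewrite !Gdd_diag addr0.
by rewrite (Gdd_anti a b c T s u) (Gdd_anti b a c T s u) opprD addrC.
Qed.

End Kb2.

From mathcomp Require Import zify.

Section Kdeg.
Variables (k : fieldType) (R : comAlgType k) (M : lmodType R) (n : nat).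
Implicit Types (T S : {set 'I_n}) (c : {set 'I_n} -> M) (y : 'I_n -> R).

Lemma deg_d y (p : int) c : kos_deg p c -> kos_deg (p - 1) (kos_d y c).
Proof.
move=> dc S hS; rewrite kos_dE big1 // => s sS; rewrite dc ?scaler0 //.
rewrite cardsU1 sS /=; apply: contra hS => /eqP <-; rewrite PoszD; apply/eqP; ring.
Qed.

Lemma deg_w j (p : int) c : kos_deg p c -> kos_deg (p + 1) (kos_w j c).
Proof.
move=> dc S hS; rewrite /kos_w; case: ifP => // jS; rewrite dc ?scaler0 //.
move: hS; rewrite (cardsD1 j S) jS /=; apply: contra => /eqP <-; rewrite PoszD; apply/eqP; ring.
Qed.

End Kdeg.

Section Kf.
Variables (k : fieldType) (R : comAlgType k) (M : lmodType R) (n : nat).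
Local Notation V := {ffun {set 'I_n} -> M}.
Implicit Types (y : 'I_n -> R) (f g : V).

Definition Dk y f : V := [ffun T => kos_d y f T].
Definition Wk (j : 'I_n) f : V := [ffun T => kos_w j f T].
Definition Hk (cc : 'I_n -> R) f : V := \sum_(j < n) cc j *: Wk j f.

Lemma Dk_lin y : linear (Dk y).
Proof.
move=> a f g; apply/ffunP => T; rewrite !ffunE !kos_dE scaler_sumr -big_split.
apply: eq_bigr => s _; rewrite !ffunE scalerDr !scalerA; congr (_ *: _ + _).
by rewrite mulrC.
Qed.
HB.instance Definition _ y := GRing.isLinear.Build R V V *:%R (Dk y) (Dk_lin y).

Lemma Wk_lin j : linear (Wk j).
Proof.
move=> a f g; apply/ffunP => T; rewrite !ffunE /kos_w; case: ifP => _.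
  by rewrite !ffunE scalerDr !scalerA mulrC.
by rewrite scaler0 addr0.
Qed.
HB.instance Definition _ j := GRing.isLinear.Build R V V *:%R (Wk j) (Wk_lin j).

Lemma Hk_lin cc : linear (Hk cc).
Proof.
move=> a f g; rewrite /Hk scaler_sumr -big_split; apply: eq_bigr => j _ /=.
by rewrite linearP scalerDr !scalerA mulrC.
Qed.
HB.instance Definition _ cc := GRing.isLinear.Build R V V *:%R (Hk cc) (Hk_lin cc).

Lemma DkW y j f : Dk y (Wk j f) + Wk j (Dk y f) = y j *: f.
Proof.
apply/ffunP => T; rewrite !ffunE -(kos_homot1 y j f T); congr (_ + _).
  by apply: kos_d_ext => S; rewrite ffunE.
by apply: kos_w_ext => S; rewrite ffunE.
Qed.

Lemma DkH y cc f :
  Dk y (Hk cc f) + Hk cc (Dk y f) = (\sum_(j < n) cc j * y j) *: f.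
Proof.
rewrite /Hk linear_sum -big_split scaler_suml; apply: eq_bigr => j _ /=.
by rewrite linearZ /= -scalerDr DkW scalerA.
Qed.

Lemma DkDk y f : Dk y (Dk y f) = 0.
Proof.
apply/ffunP => T; rewrite !ffunE -(kos_dd y f T); apply: kos_d_ext => S.
by rewrite ffunE.
Qed.

Lemma DkDk_anti a b f : Dk a (Dk b f) = - Dk b (Dk a f).
Proof.
apply/eqP; rewrite -addr_eq0; apply/eqP/ffunP => T; rewrite !ffunE.
rewrite -(kos_dd_anti a b f T); congr (_ + _); apply: kos_d_ext => S; by rewrite ffunE.
Qed.

Lemma Dk_tD a b f : Dk (fun i => a i + b i) f = Dk a f + Dk b f.
Proof.
apply/ffunP => T; rewrite !ffunE !kos_dE -big_split; apply: eq_bigr => s _.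
by rewrite mulrDr scalerDl.
Qed.

Lemma Dk_tZ r a f : Dk (fun i => r * a i) f = r *: Dk a f.
Proof.
apply/ffunP => T; rewrite !ffunE !kos_dE scaler_sumr; apply: eq_bigr => s _.
by rewrite scalerA mulrCA.
Qed.

Lemma degV0 (p : int) : kos_deg p (0 : V).
Proof. by move=> S _; rewrite ffunE. Qed.

Lemma degVP (p : int) (a : R) f g :
  kos_deg p f -> kos_deg p g -> kos_deg p (a *: f + g).
Proof. by move=> df dg S hS; rewrite !ffunE df // dg // scaler0 addr0. Qed.

Lemma degV_sum (p : int) (I : finType) (F : I -> V) :
  (forall i, kos_deg p (F i)) -> kos_deg p (\sum_i F i).
Proof.
move=> dF S hS; rewrite sum_ffunE big1 // => i _; exact: dF.
Qed.

Lemma degDk y (p : int) f : kos_deg p f -> kos_deg (p - 1) (Dk y f).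
Proof.
move=> df S hS; rewrite ffunE; exact: (deg_d y df hS).
Qed.

Lemma degWk j (p : int) f : kos_deg p f -> kos_deg (p + 1) (Wk j f).
Proof. by move=> df S hS; rewrite ffunE; exact: (deg_w j df hS). Qed.

Lemma degHk cc (p : int) f : kos_deg p f -> kos_deg (p + 1) (Hk cc f).
Proof.
move=> df; apply: degV_sum => j S hS; rewrite ffunE (degWk j df hS) scaler0 //.
Qed.

End Kf.

Lemma choice_fn (A B : Type) (P : A -> B -> Prop) :
  (forall x, exists y, P x y) -> exists f, forall x, P x (f x).
Proof.
move=> H; exists (fun x => proj1_sig (constructive_indefinite_description _ (H x))).
by move=> x; exact: (proj2_sig (constructive_indefinite_description _ (H x))).
Qed.

Section Abs.
Variables (k : fieldType) (R : comAlgType k) (V : lmodType R).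

Definition lc d (a : 'I_d -> k) (v : 'I_d -> V) : V := \sum_(i < d) (a i)%:A *: v i.

Definition subsp (P : V -> Prop) :=
  P 0 /\ forall (a : k) u w, P u -> P w -> P (a%:A *: u + w).

Definition ahdim (Z B : V -> Prop) d := exists v : 'I_d -> V,
  [/\ forall i, Z (v i),
      forall a, B (lc a v) -> forall i, a i = 0
    & forall c, Z c -> exists a, B (c - lc a v)].

Lemma algD (a b : k) : (a + b)%:A = a%:A + b%:A :> R.
Proof. by rewrite scalerDl. Qed.
Lemma algM (a b : k) : (a * b)%:A = a%:A * b%:A :> R.
Proof. by rewrite mulr_algl scalerA. Qed.
Lemma algN (a : k) : (- a)%:A = - a%:A :> R.
Proof. by rewrite scaleNr. Qed.
Lemma alg0 : (0 : k)%:A = 0 :> R.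
Proof. by rewrite scale0r. Qed.
Lemma alg1 : (1 : k)%:A = 1 :> R.
Proof. by rewrite scale1r. Qed.
Lemma algsum (I : finType) (F : I -> k) : (\sum_i F i)%:A = \sum_i (F i)%:A :> R.
Proof. by rewrite scaler_suml. Qed.

Section Sub.
Variable P : V -> Prop.
Hypothesis sP : subsp P.
Lemma subsp0 : P 0. Proof. by case: sP. Qed.
Lemma subspD u w : P u -> P w -> P (u + w).
Proof. by move=> pu pw; have := sP.2 1 u w pu pw; rewrite alg1 scale1r. Qed.
Lemma subspZ a u : P u -> P (a%:A *: u).
Proof. by move=> pu; have := sP.2 a u 0 pu subsp0; rewrite addr0. Qed.
Lemma subspB u w : P u -> P w -> P (u - w).
Proof.
move=> pu pw; have := sP.2 (-1) w u pw pu.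
by rewrite algN alg1 scaleN1r addrC.
Qed.
Lemma subsp_sum (I : finType) (F : I -> V) : (forall i, P (F i)) -> P (\sum_i F i).
Proof. by move=> H; apply: (big_ind P subsp0 subspD) => i _. Qed.
Lemma subsp_lc d (a : 'I_d -> k) v : (forall i, P (v i)) -> P (lc a v).
Proof. by move=> H; apply: subsp_sum => i; apply: subspZ. Qed.
End Sub.

Lemma lcD d (a b : 'I_d -> k) v : lc (fun i => a i + b i) v = lc a v + lc b v.
Proof. by rewrite /lc -big_split; apply: eq_bigr => i _; rewrite algD scalerDl. Qed.
Lemma lcN d (a : 'I_d -> k) v : lc (fun i => - a i) v = - lc a v.
Proof. by rewrite /lc -sumrN; apply: eq_bigr => i _; rewrite algN scaleNr. Qed.
Lemma lcZ d (c : k) (a : 'I_d -> k) v : lc (fun i => c * a i) v = c%:A *: lc a v.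
Proof. by rewrite /lc scaler_sumr; apply: eq_bigr => i _; rewrite algM scalerA. Qed.
Lemma lc0 d (v : 'I_d -> V) : lc (fun _ => 0) v = 0.
Proof. by rewrite /lc big1 // => i _; rewrite alg0 scale0r. Qed.
Lemma lc_ext d (a b : 'I_d -> k) v : a =1 b -> lc a v = lc b v.
Proof. by move=> e; rewrite /lc; apply: eq_bigr => i _; rewrite e. Qed.

Lemma lc_lc d d' (a : 'I_d' -> k) (A : 'I_d' -> 'I_d -> k) (v : 'I_d -> V) :
  \sum_i (a i)%:A *: lc (A i) v = lc (fun j => \sum_i a i * A i j) v.
Proof.
rewrite /lc; under eq_bigr do rewrite scaler_sumr.
rewrite exchange_big /=; apply: eq_bigr => j _.
rewrite algsum scaler_suml; apply: eq_bigr => i _.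
by rewrite algM scalerA.
Qed.

Lemma indep_le (Z B : V -> Prop) d d' (v : 'I_d -> V) (w : 'I_d' -> V) :
  subsp B -> (forall i, Z (w i)) ->
  (forall c, Z c -> exists a, B (c - lc a v)) ->
  (forall a, B (lc a w) -> forall i, a i = 0) -> (d' <= d)%N.
Proof.
move=> sB Zw span ind.
have [A hA] := choice_fn (fun i => span (w i) (Zw i)).
pose Am : 'M[k]_(d', d) := \matrix_(i, j) A i j.
have rf : row_free Am.
  apply: inj_row_free => x hx.
  have hB : B (lc (fun i => x 0 i) w).
    have -> : lc (fun i => x 0 i) w =
      \sum_i (x 0 i)%:A *: (w i - lc (A i) v) + \sum_i (x 0 i)%:A *: lc (A i) v.
      by rewrite -big_split /lc; apply: eq_bigr => i _ /=; rewrite -scalerDr subrK.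
    rewrite lc_lc.
    have -> : lc (fun j => \sum_i x 0 i * A i j) v = 0.
      rewrite -(lc0 v); apply: lc_ext => j.
      have := congr1 (fun N : 'M[k]_(1, d) => N 0 j) hx; rewrite !mxE => H.
      by rewrite -[RHS]H /=; apply: eq_bigr => i _; rewrite mxE.
    rewrite addr0; apply: subsp_sum => // i; apply: subspZ => //.
  by apply/rowP => i; rewrite mxE; apply: ind hB i.
by have := rank_leq_col Am; rewrite (eqP rf).
Qed.

Lemma ahdim_uniq (Z B : V -> Prop) d d' :
  subsp B -> ahdim Z B d -> ahdim Z B d' -> d = d'.
Proof.
move=> sB [v [Zv iv sv]] [w [Zw iw sw]]; apply/eqP; rewrite eqn_leq.
by rewrite (indep_le sB Zv sw iv) (indep_le sB Zw sv iw).
Qed.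

Lemma zid (c W X Y : V) : c - (X - Y) = (c - (W + X)) + (W + Y).
Proof.
by rewrite opprB -addrA opprD addrACA addNr add0r [- X + Y]addrC.
Qed.

Lemma extract (Z B : V -> Prop) : subsp B -> forall d (w : 'I_d -> V),
  (forall i, Z (w i)) -> (forall c, Z c -> exists a, B (c - lc a w)) ->
  exists d', ahdim Z B d'.
Proof.
move=> sB; elim=> [|d IH] w Zw sw.
  by exists 0%N, w; split=> // a _ [].
case: (classic (forall a, B (lc a w) -> forall i, a i = 0)) => [ind|nind].
  by exists d.+1, w.
have [a H1] := not_all_ex_not _ _ nind.
have [Ba H2] := imply_to_and _ _ H1.
have [j aj] := not_all_ex_not _ _ H2.
have aj0 : a j != 0 by apply/eqP.
apply: (IH (fun i : 'I_d => w (lift j i))) => [i|c Zc]; first exact: Zw.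
have [b Hb] := sw c Zc.
pose be := b j / a j.
exists (fun i => b (lift j i) + - (be * a (lift j i))).
have E1 : lc b w = (b j)%:A *: w j + lc (fun i => b (lift j i)) (fun i => w (lift j i)).
  by rewrite /lc (bigD1_ord j).
have E2 : lc a w = (a j)%:A *: w j + lc (fun i => a (lift j i)) (fun i => w (lift j i)).
  by rewrite /lc (bigD1_ord j).
have -> : c - lc (fun i => b (lift j i) + - (be * a (lift j i))) (fun i => w (lift j i))
   = (c - lc b w) + be%:A *: lc a w.
  rewrite lcD lcN lcZ E1 E2 scalerDr scalerA -algM /be divfK //.
  exact: zid.
by apply: subspD => //; apply: subspZ.
Qed.

End Abs.

Section Abs2.
Variables (k : fieldType) (R : comAlgType k) (V : lmodType R).
Lemma ahdim_transfer (V' : lmodType R) (Z B : V -> Prop) (Z' B' : V' -> Prop)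
    (f : V -> V') (g : V' -> V) d :
  linear f -> (forall u, Z u -> Z' (f u)) -> (forall u, B u -> B' (f u)) ->
  (forall u, Z' u -> Z (g u)) -> (forall u, B' u -> B (g u)) ->
  (forall u, g (f u) = u) -> (forall u, f (g u) = u) ->
  ahdim Z B d -> ahdim Z' B' d.
Proof.
move=> fl fZ fB gZ gB gf fg [v [Zv iv sv]].
have f0 : f 0 = 0.
  have := fl 1 0 0; rewrite scaler0 addr0 scale1r -{1}[f 0]addr0.
  by move/addrI.
have fD : forall u w, f (u + w) = f u + f w.
  by move=> u w; have := fl 1 u w; rewrite !scale1r.
have fZs : forall (r : R) u, f (r *: u) = r *: f u.
  by move=> r u; have := fl r u 0; rewrite !addr0 f0 addr0.
have fN : forall u, f (- u) = - f u.
  by move=> u; rewrite -scaleN1r fZs scaleN1r.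
have flc : forall a, f (lc a v) = lc a (fun i => f (v i)).
  move=> a; rewrite /lc (big_morph f fD f0); apply: eq_bigr => i _.
  by rewrite fZs.
exists (fun i => f (v i)); split.
- by move=> i; apply: fZ.
- by move=> a Ha; apply: iv; have := gB _ Ha; rewrite -flc gf.
move=> c Zc; have [a Ha] := sv _ (gZ _ Zc); exists a.
by have := fB _ Ha; rewrite fD fN fg flc.
Qed.

End Abs2.

Lemma splitL d1 d2 (j : 'I_d1) : split (lshift d2 j) = inl j.
Proof. exact: (unsplitK (inl _ j)). Qed.
Lemma splitR d1 d2 (j : 'I_d2) : split (rshift d1 j) = inr j.
Proof. exact: (unsplitK (inr _ j)). Qed.

Section Prod.
Variables (k : fieldType) (R : comAlgType k) (V1 V2 : lmodType R).
Variables (Z1 B1 : V1 -> Prop) (Z2 B2 : V2 -> Prop).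

Definition ZP (u : V1 * V2) := Z1 u.1 /\ Z2 u.2.
Definition BP (u : V1 * V2) := B1 u.1 /\ B2 u.2.

Lemma pairE (u w : V1 * V2) : u.1 = w.1 -> u.2 = w.2 -> u = w.
Proof. by case: u w => [? ?] [? ?] /= -> ->. Qed.

Lemma fst_sum (I : finType) (F : I -> V1 * V2) : (\sum_i F i).1 = \sum_i (F i).1.
Proof. exact: (big_morph fst (fun _ _ => erefl) erefl). Qed.
Lemma snd_sum (I : finType) (F : I -> V1 * V2) : (\sum_i F i).2 = \sum_i (F i).2.
Proof. exact: (big_morph snd (fun _ _ => erefl) erefl). Qed.

Lemma lc_fst d (a : 'I_d -> k) (w : 'I_d -> V1 * V2) :
  (lc a w).1 = lc a (fun i => (w i).1).
Proof. by rewrite /lc fst_sum. Qed.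
Lemma lc_snd d (a : 'I_d -> k) (w : 'I_d -> V1 * V2) :
  (lc a w).2 = lc a (fun i => (w i).2).
Proof. by rewrite /lc snd_sum. Qed.

Definition pv d1 d2 (v1 : 'I_d1 -> V1) (v2 : 'I_d2 -> V2) (i : 'I_(d1 + d2)) : V1 * V2 :=
  match split i with inl j => (v1 j, 0) | inr j => (0, v2 j) end.

Lemma lc_pv d1 d2 (a : 'I_(d1 + d2) -> k) v1 v2 :
  lc a (pv v1 v2) = (lc (fun j => a (lshift d2 j)) v1, lc (fun j => a (rshift d1 j)) v2).
Proof.
apply: pairE; rewrite /= /lc ?fst_sum ?snd_sum big_split_ord /=.
  rewrite [X in _ + X]big1 ?addr0; last by move=> j _; rewrite /pv splitR /= scaler0.
  by apply: eq_bigr => j _; rewrite /pv splitL.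
rewrite big1 ?add0r; last by move=> j _; rewrite /pv splitL /= scaler0.
by apply: eq_bigr => j _; rewrite /pv splitR.
Qed.

Lemma subspP : subsp B1 -> subsp B2 -> subsp BP.
Proof.
move=> s1 s2; split; first by split; [exact: subsp0 s1 | exact: subsp0 s2].
by move=> a u w [? ?] [? ?]; split; [apply: s1.2 | apply: s2.2].
Qed.

Lemma prod_r d1 d2 : subsp Z1 -> subsp Z2 ->
  ahdim Z1 B1 d1 -> ahdim Z2 B2 d2 -> ahdim ZP BP (d1 + d2).
Proof.
move=> sZ1 sZ2 [v1 [Zv1 iv1 sv1]] [v2 [Zv2 iv2 sv2]].
exists (pv v1 v2); split.
- move=> i; rewrite /pv; case: (split i) => j; split => //=.
    exact: subsp0 sZ2.
  exact: subsp0 sZ1.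
- move=> a; rewrite lc_pv => -[/= H1 H2] i.
  rewrite -(splitK i); case: (split i) => j /=; [exact: iv1 H1 j | exact: iv2 H2 j].
move=> c [Zc1 Zc2].
have [a1 Ha1] := sv1 _ Zc1; have [a2 Ha2] := sv2 _ Zc2.
exists (fun i => match split i with inl j => a1 j | inr j => a2 j end).
rewrite lc_pv (@lc_ext _ _ _ _ _ a1); last by move=> j; rewrite splitL.
rewrite (@lc_ext _ _ _ _ _ a2); last by move=> j; rewrite splitR.
by split.
Qed.

Lemma prod_l d : subsp Z1 -> subsp Z2 -> subsp B1 -> subsp B2 ->
  ahdim ZP BP d -> exists d1 d2,
    [/\ ahdim Z1 B1 d1, ahdim Z2 B2 d2 & d = (d1 + d2)%N].
Proof.
move=> sZ1 sZ2 sB1 sB2 hd; have [w [Zw iw sw]] := hd.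
have [d1 h1] : exists d1, ahdim Z1 B1 d1.
  apply: (@extract _ _ _ _ _ sB1 _ (fun i => (w i).1)) => [i|c Zc].
    by case: (Zw i).
  have [a [Ha _]] := sw (c, 0) (conj Zc (subsp0 sZ2)).
  by exists a; move: Ha; rewrite /= lc_fst.
have [d2 h2] : exists d2, ahdim Z2 B2 d2.
  apply: (@extract _ _ _ _ _ sB2 _ (fun i => (w i).2)) => [i|c Zc].
    by case: (Zw i).
  have [a [_ Ha]] := sw (0, c) (conj (subsp0 sZ1) Zc).
  by exists a; move: Ha; rewrite /= lc_snd.
exists d1, d2; split => //.
exact: (ahdim_uniq (subspP sB1 sB2) hd (prod_r sZ1 sZ2 h1 h2)).
Qed.

End Prod.

Section Bridge.
Variables (k : fieldType) (R : comAlgType k) (M : lmodType R) (n : nat).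
Local Notation V := {ffun {set 'I_n} -> M}.
Implicit Types (y : 'I_n -> R) (f g : V) (c : {set 'I_n} -> M).

Definition ZZ y (p : int) (f : V) := kos_deg p f /\ Dk y f = 0.
Definition BB y (p : int) (f : V) := exists e : V, kos_deg (p + 1) e /\ f = Dk y e.
Definition toV c : V := [ffun S => c S].

Lemma toVK f : toV (fun S => f S) = f.
Proof. by apply/ffunP => S; rewrite ffunE. Qed.

Lemma Dk_toV y c : Dk y (toV c) = toV (kos_d y c).
Proof. by apply/ffunP => T; rewrite !ffunE; apply: kos_d_ext => S; rewrite ffunE. Qed.

Lemma toV_inj c1 c2 : toV c1 = toV c2 -> c1 = c2.
Proof.
move=> e; apply: functional_extensionality => S.
by have := congr1 (fun f : V => f S) e; rewrite !ffunE.
Qed.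

Lemma deg_toV (p : int) c : kos_deg p c <-> kos_deg p (toV c).
Proof.
split=> h S hS; first by rewrite ffunE h.
by have := h S hS; rewrite ffunE.
Qed.

Lemma toV0 : toV (fun _ => 0) = 0.
Proof. by apply/ffunP => S; rewrite !ffunE. Qed.

Lemma toV_cyc y p c : kos_cycle y p c <-> ZZ y p (toV c).
Proof.
rewrite /kos_cycle /ZZ deg_toV Dk_toV -toV0; split=> -[h1 h2]; split=> //.
  by rewrite h2.
exact: toV_inj.
Qed.

Lemma toV_bdry y p c : kos_bdry y p c <-> BB y p (toV c).
Proof.
split=> -[e [de ce]].
  by exists (toV e); rewrite -deg_toV Dk_toV ce.
exists (fun S => e S); split; first by move=> S hS; exact: de.
by apply: toV_inj; rewrite -Dk_toV toVK.
Qed.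

Lemma toV_lc d (a : 'I_d -> k) (v : 'I_d -> {set 'I_n} -> M) :
  toV (kos_lincomb a v) = lc a (fun i => toV (v i)).
Proof.
apply/ffunP => S; rewrite /lc sum_ffunE ffunE /kos_lincomb.
by apply: eq_bigr => i _; rewrite !ffunE.
Qed.

Lemma toV_sub c1 c2 : toV (fun S => c1 S - c2 S) = toV c1 - toV c2.
Proof. by apply/ffunP => S; rewrite !ffunE. Qed.

Lemma bridge y p d : kos_hdim M y p d <-> ahdim (ZZ y p) (BB y p) d.
Proof.
split=> -[v [Zv iv sv]].
  exists (fun i => toV (v i)); split.
  - by move=> i; rewrite -toV_cyc.
  - by move=> a; rewrite -toV_lc -toV_bdry; apply: iv.
  move=> c; rewrite -(toVK c) -toV_cyc => /sv [a Ha]; exists a.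
  by rewrite -toV_lc -toV_sub -toV_bdry.
have ev : (fun i => toV (fun S => v i S)) = v.
  by apply: functional_extensionality => i; exact: toVK.
exists (fun i S => v i S); split.
- by move=> i; rewrite toV_cyc toVK.
- by move=> a; rewrite toV_bdry toV_lc ev; apply: iv.
move=> c; rewrite toV_cyc => /sv [a Ha]; exists a.
by rewrite toV_bdry toV_sub toV_lc ev.
Qed.

Lemma subspZZ y p : subsp (ZZ y p).
Proof.
split; first by split; [exact: degV0 | rewrite linear0].
move=> a u w [du Du] [dw Dw]; split; first exact: degVP.
by rewrite linearP /= Du Dw scaler0 addr0.
Qed.

Lemma subspBB y p : subsp (BB y p).
Proof.
split; first by exists 0; split; [exact: degV0 | rewrite linear0].
move=> a u w [eu [du ->]] [ew [dw ->]]; exists (a%:A *: eu + ew); split.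
  exact: degVP.
by rewrite linearP.
Qed.

End Bridge.

Section Phi.
Variables (k : fieldType) (R : comAlgType k) (M : lmodType R) (n : nat).
Local Notation V := {ffun {set 'I_n} -> M}.
Variables (z0 e cc : 'I_n -> R) (r : R).
Hypothesis hr : \sum_j cc j * z0 j = r.
Hypothesis he : \sum_j cc j * e j = 0.
Local Notation z' := (fun i => z0 i + r * e i).
Implicit Types (f g : V).

Local Notation D0 := (Dk (M := M) z0).
Local Notation De := (Dk (M := M) e).
Local Notation H := (Hk (M := M) cc).

Lemma Dz' f : Dk z' f = D0 f + r *: De f.
Proof. by rewrite Dk_tD Dk_tZ. Qed.

Lemma P1 f : D0 (H f) = r *: f - H (D0 f).
Proof. by rewrite -hr -(DkH z0 cc f) addrK. Qed.

Lemma P2 f : De (H f) = - H (De f).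
Proof.
have := DkH e cc f; rewrite he scale0r => /eqP; rewrite addr_eq0 => /eqP.
by [].
Qed.

Definition Phi f : V := f + H (De f).
Definition Psi f : V := f - H (De f).

Lemma DeHDe f : De (H (De f)) = 0.
Proof. by rewrite P2 DkDk linear0 oppr0. Qed.

Lemma PsiPhi f : Psi (Phi f) = f.
Proof.
rewrite /Psi /Phi linearD /= DeHDe addr0.
by rewrite addrK.
Qed.

Lemma PhiPsi f : Phi (Psi f) = f.
Proof.
rewrite /Psi /Phi linearB /= DeHDe subr0.
by rewrite subrK.
Qed.

Lemma chain_Phi f : D0 (Phi f) = Phi (Dk z' f).
Proof.
rewrite /Phi Dz' linearD /= P1 (DkDk_anti z0 e) linearN /= opprK.
rewrite linearD /= linearZ /= DkDk scaler0 addr0.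
by rewrite addrA.
Qed.

Lemma chain_Psi f : Dk z' (Psi f) = Psi (D0 f).
Proof.
rewrite /Psi !Dz' !linearB /= P1 (DkDk_anti z0 e) linearN /= opprK.
rewrite DeHDe scaler0 subr0 opprD addrA addrAC subrK.
by [].
Qed.

Lemma Phi_lin : linear Phi.
Proof.
move=> a f g; rewrite /Phi !linearP /= scalerDr addrACA.
by [].
Qed.
Lemma Psi_lin : linear Psi.
Proof.
move=> a f g; rewrite /Psi !linearP /= scalerDr scalerN addrACA.
by [].
Qed.

Lemma degPhi (p : int) f : kos_deg p f -> kos_deg p (Phi f).
Proof.
move=> df; have := degHk cc (degDk e df); rewrite subrK => dh.
by have := degVP 1 df dh; rewrite scale1r.
Qed.
Lemma degPsi (p : int) f : kos_deg p f -> kos_deg p (Psi f).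
Proof.
move=> df; have := degHk cc (degDk e df); rewrite subrK => dh.
by have := degVP (-1) dh df; rewrite scaleN1r addrC.
Qed.

Lemma Phi_iso p d :
  ahdim (ZZ (M:=M) z' p) (BB (M:=M) z' p) d <-> ahdim (ZZ (M:=M) z0 p) (BB (M:=M) z0 p) d.
Proof.
split.
  apply: (ahdim_transfer (f := Phi) (g := Psi)).
  - exact: Phi_lin.
  - move=> u [du Du]; split; first exact: degPhi.
    by rewrite chain_Phi Du /Phi !raddf0 ?addr0.
  - move=> u [w [dw ->]]; exists (Phi w); split; first exact: degPhi.
    by rewrite chain_Phi.
  - move=> u [du Du]; split; first exact: degPsi.
    by rewrite chain_Psi Du /Psi !raddf0 ?subr0 ?addr0.
  - move=> u [w [dw ->]]; exists (Psi w); split; first exact: degPsi.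
    by rewrite chain_Psi.
  - exact: PsiPhi.
  - exact: PhiPsi.
apply: (ahdim_transfer (f := Psi) (g := Phi)).
- exact: Psi_lin.
- move=> u [du Du]; split; first exact: degPsi.
  by rewrite chain_Psi Du /Psi !raddf0 ?subr0 ?addr0.
- move=> u [w [dw ->]]; exists (Psi w); split; first exact: degPsi.
  by rewrite chain_Psi.
- move=> u [du Du]; split; first exact: degPhi.
  by rewrite chain_Phi Du /Phi !raddf0 ?addr0.
- move=> u [w [dw ->]]; exists (Phi w); split; first exact: degPhi.
  by rewrite chain_Phi.
- exact: PhiPsi.
- exact: PsiPhi.
Qed.

End Phi.

Section Split.
Variables (k : fieldType) (R : comAlgType k) (M : lmodType R) (m : nat).
Local Notation V0 := {ffun {set 'I_m} -> M}.
Local Notation V1 := {ffun {set 'I_m.+1} -> M}.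
Local Notation wo := (widen_ord (leqnSn m)).
Implicit Types (S : {set 'I_m}) (T : {set 'I_m.+1}).

Definition wid (S : {set 'I_m}) : {set 'I_m.+1} := [set wo j | j in S].
Definition pre (T : {set 'I_m.+1}) : {set 'I_m} := [set j | wo j \in T].

Lemma wo_inj : injective wo.
Proof. by move=> a b /(congr1 val) /= /val_inj. Qed.

Lemma wo_neq_max j : (wo j == ord_max) = false.
Proof. by apply/negbTE; rewrite -(inj_eq val_inj) /= neq_ltn ltn_ord. Qed.

Lemma ord_cases (t : 'I_m.+1) : t = ord_max \/ exists j, t = wo j.
Proof.
case: (ltnP t m) => h; first by right; exists (Ordinal h); apply: val_inj.
left; apply: val_inj => /=; have := ltn_ord t; rewrite ltnS => h2.
by apply/eqP; rewrite eqn_leq h2 h.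
Qed.

Lemma mem_wid S j : (wo j \in wid S) = (j \in S).
Proof. exact: mem_imset wo_inj. Qed.

Lemma max_notin_wid S : ord_max \notin wid S.
Proof. by apply/imsetP => -[j _ /eqP]; rewrite eq_sym wo_neq_max. Qed.

Lemma pre_wid S : pre (wid S) = S.
Proof. by apply/setP => j; rewrite inE mem_wid. Qed.

Lemma pre_U1max T : pre (ord_max |: T) = pre T.
Proof. by apply/setP => j; rewrite !inE wo_neq_max. Qed.

Lemma card_wid S : #|wid S| = #|S|.
Proof. exact: card_imset wo_inj. Qed.

Lemma wid_U1 S j : wid (j |: S) = wo j |: wid S.
Proof. exact: imsetU1. Qed.

Lemma wid_pre T :
  T = if ord_max \in T then ord_max |: wid (pre T) else wid (pre T).
Proof.
apply/setP => t; case: (ord_cases t) => [->|[j ->]].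
  by case: ifP => h; rewrite ?inE ?eqxx // (negbTE (max_notin_wid _)).
by case: ifP => _; rewrite ?inE ?wo_neq_max /= mem_wid inE.
Qed.

Lemma sg_wid S j : sg (wid S) (wo j) = sg S j :> R.
Proof.
rewrite /sg; congr (_ ^+ _); rewrite -card_wid; apply: eq_card => t.
rewrite !inE; case: (ord_cases t) => [->|[i ->]].
  by rewrite (negbTE (max_notin_wid _)) /= (negbTE (max_notin_wid _)).
by rewrite !mem_wid inE.
Qed.

Lemma sg_maxwid S j : sg (ord_max |: wid S) (wo j) = sg S j :> R.
Proof.
rewrite -(sg_wid S j) /sg; congr (_ ^+ _); apply: eq_card => t.
rewrite !inE; case: eqP => [->|//] /=.
by rewrite (negbTE (max_notin_wid _)) /=; apply/negbTE; rewrite -leqNgt ltnW.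
Qed.

Lemma snoc_wo (T : Type) (y : 'I_m -> T) t j : snoc_tuple y t (wo j) = y j.
Proof.
rewrite /snoc_tuple /= (insubT (fun j => (j < m)%N) (ltn_ord j)) /=.
by congr y; apply: val_inj.
Qed.

Lemma snoc_max (T : Type) (y : 'I_m -> T) t : snoc_tuple y t ord_max = t.
Proof. by rewrite /snoc_tuple /= insubF // ltnn. Qed.

Definition spl (f : V1) : V0 * V0 :=
  ([ffun S => f (ord_max |: wid S)], [ffun S => f (wid S)]).
Definition jn (g : V0 * V0) : V1 :=
  [ffun T : {set 'I_m.+1} => if ord_max \in T then g.1 (pre T) else g.2 (pre T)].

Lemma spl_jn g : spl (jn g) = g.
Proof.
case: g => g1 g2; congr pair; apply/ffunP => S; rewrite !ffunE.
  by rewrite setU11 pre_U1max pre_wid.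
by rewrite (negbTE (max_notin_wid _)) pre_wid.
Qed.

Lemma jn_spl f : jn (spl f) = f.
Proof.
apply/ffunP => T; rewrite ffunE; case: ifP => h; rewrite ffunE;
  by rewrite [in RHS](wid_pre T) h.
Qed.

Lemma spl_lin : linear spl.
Proof. by move=> a f g; congr pair; apply/ffunP => S; rewrite !ffunE. Qed.

Lemma jn_lin : linear jn.
Proof. by move=> a f g; apply/ffunP => T; rewrite !ffunE; case: ifP. Qed.

Lemma chain_spl (y : 'I_m -> R) (f : V1) :
  spl (Dk (snoc_tuple y 0) f) = (Dk y (spl f).1, Dk y (spl f).2).
Proof.
congr pair; apply/ffunP => S; rewrite !ffunE !kos_dE big_mkcond big_ord_recr /=.
  rewrite !inE eqxx /= addr0 [RHS]big_mkcond; apply: eq_bigr => j _ /=.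
  rewrite !inE wo_neq_max mem_wid sg_maxwid snoc_wo ffunE.
  by rewrite setUCA -wid_U1.
rewrite (negbTE (max_notin_wid S)) /= snoc_max mulr0 scale0r addr0.
rewrite [RHS]big_mkcond; apply: eq_bigr => j _ /=.
by rewrite mem_wid sg_wid snoc_wo ffunE wid_U1.
Qed.

Lemma deg_spl (p : int) (f : V1) : kos_deg p f ->
  kos_deg (p - 1) (spl f).1 /\ kos_deg p (spl f).2.
Proof.
move=> df; split=> S hS; rewrite ffunE df //.
  rewrite cardsU1 (max_notin_wid S) card_wid /=; apply: contra hS => /eqP <-.
  by rewrite PoszD; apply/eqP; ring.
by rewrite card_wid.
Qed.

Lemma deg_jn (p : int) (g : V0 * V0) :
  kos_deg (p - 1) g.1 -> kos_deg p g.2 -> kos_deg p (jn g).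
Proof.
move=> d1 d2 T hT; rewrite ffunE; case: ifP => h.
  apply: d1; move: hT; rewrite {1}(wid_pre T) h cardsU1 (max_notin_wid _) card_wid.
  by apply: contra => /eqP h2; rewrite PoszD h2 /=; apply/eqP; ring.
by apply: d2; move: hT; rewrite {1}(wid_pre T) h card_wid.
Qed.

Lemma Dk_jn (y : 'I_m -> R) (e : V0 * V0) :
  Dk (snoc_tuple y 0) (jn e) = jn (Dk y e.1, Dk y e.2).
Proof. by rewrite -[LHS]jn_spl chain_spl spl_jn. Qed.

Lemma spl0 : spl 0 = (0, 0).
Proof. by congr pair; apply/ffunP => S; rewrite !ffunE. Qed.

Lemma jn0 : jn (0, 0) = 0.
Proof. by rewrite -spl0 jn_spl. Qed.

Lemma split_iso (y : 'I_m -> R) (p : int) d :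
  ahdim (ZZ (M:=M) (snoc_tuple y 0) p) (BB (M:=M) (snoc_tuple y 0) p) d <->
  ahdim (ZP (ZZ (M:=M) y (p - 1)) (ZZ (M:=M) y p)) (BP (BB (M:=M) y (p - 1)) (BB (M:=M) y p)) d.
Proof.
have ZZf : forall u, ZZ (snoc_tuple y 0) p u -> ZP (ZZ y (p - 1)) (ZZ y p) (spl u).
  move=> u [du Du]; have [d1 d2] := deg_spl du.
  have := chain_spl y u; rewrite Du spl0 => -[e1 e2].
  by split; split => //; symmetry.
have BBf : forall u, BB (snoc_tuple y 0) p u -> BP (BB y (p - 1)) (BB y p) (spl u).
  move=> u [w [dw ->]]; have [d1 d2] := deg_spl dw.
  rewrite chain_spl; split; [exists (spl w).1 | exists (spl w).2]; split => //.
  by move: d1; rewrite addrK subrK.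
have ZZg : forall g, ZP (ZZ y (p - 1)) (ZZ y p) g -> ZZ (snoc_tuple y 0) p (jn g).
  case=> g1 g2 [[d1 D1] [d2 D2]]; split; first exact: deg_jn.
  by rewrite Dk_jn /= D1 D2 jn0.
have BBg : forall g, BP (BB y (p - 1)) (BB y p) g -> BB (snoc_tuple y 0) p (jn g).
  case=> g1 g2 [[e1 [d1 /= ->]] [e2 [d2 /= ->]]]; exists (jn (e1, e2)); split.
    by apply: deg_jn; rewrite /= ?addrK //; move: d1; rewrite subrK.
  by rewrite Dk_jn.
split.
  apply: (ahdim_transfer (f := spl) (g := jn)) => //.
  - exact: spl_lin.
  - exact: jn_spl.
  - exact: spl_jn.
apply: (ahdim_transfer (f := jn) (g := spl)) => //.
- exact: jn_lin.
- exact: spl_jn.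
- exact: jn_spl.
Qed.

End Split.

Section Main.
Variables (k : fieldType) (R : comAlgType k) (M : lmodType R).

Lemma hdim0_exact N (w : 'I_N -> R) (p : int) :
  kos_hdim M w p 0 <-> (forall c : {set 'I_N} -> M, kos_cycle w p c -> kos_bdry w p c).
Proof.
split.
  move=> [v [_ _ span]] c /span [a Ha].
  have -> : c = (fun S => c S - kos_lincomb a v S) => //.
  apply: functional_extensionality => S; by rewrite /kos_lincomb big_ord0 subr0.
move=> H; exists (fun (i : 'I_0) (S : {set 'I_N}) => (0 : M)); split.
- by case.
- by move=> a _; case.
move=> c /H hc; exists (fun _ => 0).
have -> : (fun S => c S - kos_lincomb (fun _ => 0) (fun (i : 'I_0) (S : {set 'I_N}) => (0 : M)) S) = c => //.
apply: functional_extensionality => S; by rewrite /kos_lincomb big_ord0 subr0.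
Qed.

Lemma hdim_zero N (w : 'I_N -> R) (p : int) :
  (forall S : {set 'I_N}, #|S|%:Z != p) -> kos_hdim M w p 0.
Proof.
move=> hS; apply/hdim0_exact => c [dc _]; exists (fun _ => 0); split.
  by move=> S _.
apply: functional_extensionality => S; rewrite dc // kos_dE big1 // => s _.
by rewrite scaler0.
Qed.

Lemma exact_unit N (w cc : 'I_N -> R) (u : k) :
  u != 0 -> \sum_i cc i * w i = u%:A -> kos_exact M w.
Proof.
move=> u0 hu p c /toV_cyc [dc Dc]; apply/toV_bdry.
exists ((u^-1)%:A *: Hk cc (toV c)); split.
  by move=> S hS; rewrite ffunE (degHk cc dc hS) scaler0.
have := DkH w cc (toV c); rewrite Dc raddf0 addr0 hu => h.
by rewrite linearZ /= h scalerA -algM mulVf // alg1 scale1r.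
Qed.

Definition emax m : 'I_m.+1 -> R := fun i => if i == ord_max then 1 else 0.

Lemma dim_main m (y cy : 'I_m -> R) (p : int) d :
  kos_hdim M (fun i => snoc_tuple y 0 i + (\sum_j cy j * y j) * emax i) p d <->
  exists d1 d2, [/\ kos_hdim M y (p - 1) d1, kos_hdim M y p d2 & d = (d1 + d2)%N].
Proof.
have hr : \sum_j snoc_tuple cy 0 j * snoc_tuple y 0 j = \sum_j cy j * y j.
  by rewrite big_ord_recr /= !snoc_max mulr0 addr0; apply: eq_bigr => j _; rewrite !snoc_wo.
have he : \sum_j snoc_tuple cy 0 j * emax j = 0.
  rewrite big_ord_recr /= snoc_max mul0r addr0 big1 // => j _.
  by rewrite /emax wo_neq_max mulr0.
rewrite bridge (@Phi_iso _ _ M _ _ _ _ _ hr he) split_iso.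
split.
  move/prod_l => /(_ (subspZZ _ _ _) (subspZZ _ _ _) (subspBB _ _ _) (subspBB _ _ _)).
  by move=> [d1 [d2 [h1 h2 ->]]]; exists d1, d2; split => //; apply/bridge.
move=> [d1 [d2 [h1 h2 ->]]]; apply: prod_r; try exact: subspZZ.
  by rewrite -bridge.
by rewrite -bridge.
Qed.

End Main.

Lemma mmap_decomp (k : fieldType) (R : comAlgType k) n (x : 'I_n -> R) (p : {mpoly k[n]}) :
  exists cx : 'I_n -> R,
    mmap (in_alg R) x p = (p@_0%MM)%:A + \sum_i cx i * x i.
Proof.
elim/mpolyind: p => [|c mm p _ _ [cx IH]].
  exists (fun _ => 0); rewrite mmap0 mcoeff0 scale0r add0r big1 // => i _.
  by rewrite mul0r.
rewrite mmapD mmapZ mmapX IH mcoeffD mcoeffZ mcoeffX /= ?in_algE.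
have [->|nz] := eqVneq mm 0%MM.
  by exists cx; rewrite mmap11 mulr1 algD addrA mulr1.
have [i mi] : exists i, mm i != 0%N.
  apply/existsP; apply: contraNT nz => /existsPn h; apply/eqP/mnmP => j.
  by rewrite mnm0E; apply/eqP; move: (h j); rewrite negbK.
pose A := c%:A * (x i ^+ (mm i).-1 * \prod_(j < n | j != i) x j ^+ mm j).
exists (fun j => cx j + (if j == i then A else 0)).
rewrite /= mulr0 add0r addrCA; congr (_ + _).
rewrite [RHS](eq_bigr (fun j => cx j * x j + (if j == i then A else 0) * x j)); last by move=> j _; rewrite mulrDl.
rewrite big_split /= addrC; congr (_ + _).
rewrite (bigD1 i) //= eqxx big1 ?addr0; last by move=> j /negbTE ->; rewrite mul0r.
have hp : (0 < mm i)%N by rewrite lt0n.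
rewrite /mmap1 (bigD1 i) //= /A.
have -> : mm i = (mm i).-1.+1 by rewrite prednK.
rewrite exprS /=; ring.
Qed.

Theorem proposition2p5 (k : fieldType) (R : comAlgType k) (M : lmodType R)
  (n m : nat) (x : 'I_n -> R) (y : 'I_m -> R)
  (hyR' : forall j : 'I_m, exists P : {mpoly k[n]}, y j = mmap (in_alg R) x P)
  (hyx : forall j : 'I_m, exists c : 'I_n -> {mpoly k[n]},
           y j = \sum_(i < n) mmap (in_alg R) x (c i) * x i)
  (hxy : forall i : 'I_n, exists c : 'I_m -> {mpoly k[n]},
           x i = \sum_(j < m) mmap (in_alg R) x (c j) * y j)
  (q : {mpoly k[n]}) (lam : k) :
  let z : 'I_m.+1 -> R := snoc_tuple y (mmap (in_alg R) x q) in
  let b : 'I_m.+1 -> k := snoc_tuple (fun _ => 0) lam in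
  in_taylor_spectrum M z b ->
  [/\ in_taylor_spectrum M y (fun _ => 0),
      lam = q@_0%MM,
      (forall (p : int) (d : nat),
         kos_hdim M (kos_shift z b) p d <->
         exists d1 d2 : nat,
           [/\ kos_hdim M y (p - 1) d1, kos_hdim M y p d2 & d = (d1 + d2)%N])
    & (exists i : int, kos_index_is M y i) -> kos_index_is M (kos_shift z b) 0].
Proof.
move=> z b hsp.
set t := mmap (in_alg R) x q.
have [cx hcx] := mmap_decomp x q.
have [cxy hcxy] := choice_fn hxy.
pose cy j := \sum_i cx i * mmap (in_alg R) x (cxy i j).
have hxq : \sum_i cx i * x i = \sum_j cy j * y j.
  under eq_bigr do rewrite hcxy mulr_sumr.
  rewrite exchange_big /=; apply: eq_bigr => j _; rewrite /cy mulr_suml.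
  by apply: eq_bigr => i _; rewrite mulrA.
have ez : kos_shift z b =
    (fun i => snoc_tuple y 0 i + (t - lam%:A) * emax R i).
  apply: functional_extensionality => i; rewrite /kos_shift /z /b.
  case: (ord_cases i) => [->|[j ->]].
    by rewrite !snoc_max /emax eqxx mulr1 add0r.
  by rewrite !snoc_wo /emax wo_neq_max mulr0 addr0 alg0 subr0.
have hlam : lam = q@_0%MM.
  apply/eqP; apply/negPn/negP => hne; apply: hsp.
  apply: (@exact_unit _ _ M _ _ (snoc_tuple (fun j => - cy j) 1) (q@_0%MM - lam)).
    by rewrite subr_eq0 eq_sym.
  rewrite big_ord_recr /= snoc_max mul1r /kos_shift /z /b !snoc_max.
  rewrite (eq_bigr (fun j => - (cy j * y j))); last first.
    by move=> j _; rewrite !snoc_wo alg0 subr0 mulNr.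
  by rewrite sumrN /t hcx hxq algD algN addrCA addrA addrK.
have hr : t - lam%:A = \sum_j cy j * y j.
  by rewrite /t hcx hlam addrAC subrr add0r hxq.
have hdim : forall p d, kos_hdim M (kos_shift z b) p d <->
    exists d1 d2 : nat,
      [/\ kos_hdim M y (p - 1) d1, kos_hdim M y p d2 & d = (d1 + d2)%N].
  by move=> p d; rewrite ez hr; exact: dim_main.
split => //.
- move=> hex; apply: hsp => p c hc.
  have hy : kos_shift y (fun _ => 0) = y.
    by apply: functional_extensionality => i; rewrite /kos_shift alg0 subr0.
  rewrite hy in hex.
  have : kos_hdim M (kos_shift z b) p 0.
    apply/hdim; exists 0%N, 0%N; split => //; apply/hdim0_exact; exact: hex.
  by move/hdim0_exact; apply.
move=> [i [e [he _]]].
exists (fun p => ((if p is p'.+1 then e p' else 0) + (if (p <= m)%N then e p else 0))%N).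
split.
  move=> p hp; apply/hdim.
  exists (if p is p'.+1 then e p' else 0%N), (if (p <= m)%N then e p else 0%N); split => //.
    case: p hp => [|p'] hp.
      apply: hdim_zero => S; rewrite sub0r; apply/negP => /eqP h.
      by have := h; case: (#|S|).
    have -> : (p'.+1)%:Z - 1 = p'%:Z by rewrite -addn1 PoszD addrK.
    exact: he.
  case: ifP => hpm; first exact: he.
  apply: hdim_zero => S; apply/negP => /eqP h.
  have hS := max_card S; rewrite card_ord in hS.
  have : (#|S| = p)%N by case: h.
  by move=> hh; move: hpm; rewrite -hh hS.
rewrite (eq_bigr (fun p : 'I_m.+2 => (-1) ^+ p.+1 *
     (match nat_of_ord p with 0 => 0 | p'.+1 => e p' end)%:Z +
     (-1) ^+ p.+1 * (if (p <= m)%N then e p else 0%N)%:Z)); last first.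
  by move=> p _; rewrite PoszD mulrDr.
have E1 : \sum_(p < m.+2) (-1) ^+ p.+1 *
     (match nat_of_ord p with O => 0%N | p'.+1 => e p' end)%:Z =
    - \sum_(p < m.+1) (-1) ^+ p.+1 * (e p)%:Z :> int.
  rewrite big_ord_recl /= mulr0 add0r -sumrN; apply: eq_bigr => p _.
  by rewrite /bump leq0n add1n add0n exprS mulN1r mulNr.
have E2 : \sum_(p < m.+2) (-1) ^+ p.+1 * (if (p <= m)%N then e p else 0%N)%:Z =
    \sum_(p < m.+1) (-1) ^+ p.+1 * (e p)%:Z :> int.
  rewrite big_ord_recr /= ltnn mulr0 addr0; apply: eq_bigr => p _ /=.
  by rewrite -ltnS ltn_ord.
rewrite big_split E1 E2 /=; symmetry; exact: addNr.
Qed.
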